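(* For a tuple $\vec a=(a_1,\dots,a_{2i})$ of odd integers and a virtual character $\chi$ of $C_8$, set $$F_{4i+1}(\vec a)(\chi)=\frac18\sum_{1\ne\lambda\in C_8}\frac{\lambda^{(a_1+\cdots+a_{2i})/2}(1+\lambda^{a_1})}{(1-\lambda^{a_1})^2(1-\lambda^{a_2})\cdots(1-\lambda^{a_{2i}})}\,\chi(\lambda).$$ Then $F_5((1,1))(2\rho_0-\rho_1-\rho_3)$ has order $2$ in $\mathbb{R}/\mathbb{Z}$ and $F_{13}((1,1,1,1,1,1))(2\rho_0-\rho_1-\rho_3)$ has order $4$ in $\mathbb{R}/\mathbb{Z}$.
   Context: $C_8=\{\lambda\in S^1:\lambda^8=1\}$, $\rho_a(\lambda)=\lambda^a$, $\rho_0$ trivial. $F_{4i+1}(\vec a)(\rho)$ equals the eta invariant of $X^{4i+1}(8,\vec a)-X^{4i+1}_0(8,\vec a)$ twisted by $\rho$, where $X^{4i+1}(8,\vec a)=S(H\otimes H\oplus(2i-1)\mathbb{C}\to S^2)/C_8$ with $H$ the Hopf line bundle over $S^2$ and $C_8$ acting fibrewise via $\rho_{a_1}\oplus\cdots\oplus\rho_{a_{2i}}$. The virtual representation $2\rho_0-\rho_1-\rho_3$ is the restriction to $\langle s\rangle\cong C_8$ of $2-\chi_\rho$ for the 2-dimensional representation $\chi_\rho$ of $SD_{16}$. *)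

(* Defs.v *)
From HB Require Import structures.
From mathcomp Require Import all_boot all_order all_algebra all_field.
Set Implicit Arguments. Unset Strict Implicit. Unset Printing Implicit Defensive.
Import Order.TTheory GRing.Theory Num.Theory.
Local Open Scope ring_scope.

(* C_8 = { z ^+ k | k < 8 } for z a primitive 8th root of unity in algC.
   A virtual character of C_8 is represented as a function algC -> algC
   (only its values on C_8 matter). *)

Definition rho (a : int) (l : algC) : algC := l ^ a.

Definition chi_SD (l : algC) : algC := 2 * rho 0 l - rho 1 l - rho 3 l.

Definition F (z : algC) (a : seq int) (chi : algC -> algC) : algC :=
  8^-1 * \sum_(k < 8 | k != ord0)
    (let l := z ^+ k in
     l ^ ((\sum_(x <- a) x) %/ 2)%Z * (1 + l ^ (nth 0 a 0))
       / ((1 - l ^ (nth 0 a 0)) ^+ 2 * \prod_(x <- behead a) (1 - l ^ x))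
       * chi l).

Definition order_RZ (x : algC) (n : nat) : Prop :=
  [/\ x \is Num.real, (0 < n)%N, n%:R * x \is a Num.int &
      forall m : nat, (0 < m < n)%N -> ~ (m%:R * x \is a Num.int)].

(* Main.v *)
Require Import Defs.
From HB Require Import structures.
From mathcomp Require Import all_boot all_order all_algebra all_field ring.
Import Order.TTheory GRing.Theory Num.Theory.
Local Open Scope ring_scope.


Definition T1 (l : algC) : algC := l*(1+l)*(2-l-l^+3) * ((1-l)^-1)^+3.
Definition T2 (l : algC) : algC := l^+3*(1+l)*(2-l-l^+3) * ((1-l)^-1)^+7.

Lemma F1E z : F z [::1;1] chi_SD = 8^-1 * \sum_(k < 8 | k != ord0) T1 (z^+k).
Proof.
rewrite /F; congr (_ * _); apply: eq_bigr => k _ /=.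
rewrite /chi_SD /rho /T1 !big_cons !big_nil /= ?big_cons ?big_nil.
have ->: ((1+(1+0))%/2)%Z = 1 :> int by [].
have -> : forall x : algC, x^+2*(x*1) = x^+3 by move=> x; ring.
change (z^+k ^ 3) with (z^+k ^+ 3).
rewrite ?expr1z ?expr0z exprVn. ring.
Qed.

Lemma F2E z : F z [::1;1;1;1;1;1] chi_SD = 8^-1 * \sum_(k < 8 | k != ord0) T2 (z^+k).
Proof.
rewrite /F; congr (_ * _); apply: eq_bigr => k _ /=.
rewrite /chi_SD /rho /T2 !big_cons !big_nil /= ?big_cons ?big_nil.
have ->: ((1+(1+(1+(1+(1+(1+0))))))%/2)%Z = 3 :> int by [].
have -> : forall x : algC, x^+2*(x*(x*(x*(x*(x*1))))) = x^+7 by move=> x; ring.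
change (z^+k ^ 3) with (z^+k ^+ 3).
rewrite ?expr1z ?expr0z exprVn. ring.
Qed.

Lemma sumE (z : algC) (f : algC -> algC) : \sum_(k < 8 | k != ord0) f (z^+k) =
  f (z^+1) + f (z^+2) + f (z^+3) + f (z^+4) + f (z^+5) + f (z^+6) + f (z^+7).
Proof. by rewrite big_mkcond !big_ord_recl big_ord0 /= !addrA addr0 add0r. Qed.

Lemma z4E (z : algC) : 8.-primitive_root z -> z^+4 = -1.
Proof.
move=> hz. have h8 := prim_expr_order hz.
have h4 : z^+4 != 1 by rewrite -(prim_order_dvd hz).
have : (z^+4)^+2 == 1 by rewrite -exprM; apply/eqP.
by rewrite sqrf_eq1 (negbTE h4) /= => /eqP.
Qed.

Lemma step (a N R D : algC) (m : nat) : a != 0 -> D * N = R * a^+m -> D * (N * (a^-1)^+m) = R.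
Proof. move=> ha h; by rewrite mulrA h -mulrA -exprMn mulfV // expr1n mulr1. Qed.

Lemma red (z P r Q : algC) : z^+4 = -1 -> P = r + Q*(z^+4+1) -> P = r.
Proof. by move=> h ->; rewrite h addNr mulr0 addr0. Qed.

Lemma val1 (z : algC) (hz : 8.-primitive_root z) : F z [::1;1] chi_SD = -3/2.
Proof.
have z4 := @z4E z hz.
rewrite F1E sumE.
have h1 : 1 * T1 (z^+1) = ((- 3) * z^+0 + (- 5) * z^+1 + (- 4) * z^+2 + (- 1) * z^+3).
  rewrite /T1; apply: (@step _ _ _ _ 3); first by rewrite subr_eq0 eq_sym -(prim_order_dvd hz).
  apply: (@red z _ _ (3 * z^+0 + (- 2) * z^+1 + (- 1) * z^+2) z4); ring.
have h2 : 1 * T1 (z^+2) = ((- 1) * z^+2).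
  rewrite /T1; apply: (@step _ _ _ _ 3); first by rewrite subr_eq0 eq_sym -(prim_order_dvd hz).
  apply: (@red z _ _ (3 * z^+2 + (- 2) * z^+4 + (- 1) * z^+6) z4); ring.
have h3 : 1 * T1 (z^+3) = ((- 3) * z^+0 + (- 1) * z^+1 + 4 * z^+2 + (- 5) * z^+3).
  rewrite /T1; apply: (@step _ _ _ _ 3); first by rewrite subr_eq0 eq_sym -(prim_order_dvd hz).
  apply: (@red z _ _ (3 * z^+0 + 1 * z^+1 + (- 4) * z^+2 + (- 2) * z^+3 + (- 6) * z^+4 + 11 * z^+5 + (- 1) * z^+6 + 5 * z^+7 + (- 6) * z^+8 + (- 1) * z^+11) z4); ring.
have h4 : 1 * T1 (z^+4) = (0).
  rewrite /T1; apply: (@step _ _ _ _ 3); first by rewrite subr_eq0 eq_sym -(prim_order_dvd hz).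
  apply: (@red z _ _ (2 * z^+4 + (- 1) * z^+8 + (- 1) * z^+16) z4); ring.
have h5 : 1 * T1 (z^+5) = ((- 3) * z^+0 + 5 * z^+1 + (- 4) * z^+2 + 1 * z^+3).
  rewrite /T1; apply: (@step _ _ _ _ 3); first by rewrite subr_eq0 eq_sym -(prim_order_dvd hz).
  apply: (@red z _ _ (3 * z^+0 + (- 5) * z^+1 + 4 * z^+2 + (- 1) * z^+3 + (- 3) * z^+4 + (- 2) * z^+5 + 11 * z^+6 + (- 11) * z^+7 + 6 * z^+8 + 2 * z^+9 + (- 1) * z^+10 + (- 4) * z^+11 + 6 * z^+12 + (- 5) * z^+13 + 1 * z^+14 + (- 1) * z^+16 + 1 * z^+17 + (- 1) * z^+21) z4); ring.
have h6 : 1 * T1 (z^+6) = (1 * z^+2).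
  rewrite /T1; apply: (@step _ _ _ _ 3); first by rewrite subr_eq0 eq_sym -(prim_order_dvd hz).
  apply: (@red z _ _ ((- 1) * z^+2 + 3 * z^+6 + 3 * z^+8 + (- 3) * z^+10 + (- 2) * z^+12 + 2 * z^+16 + (- 1) * z^+18 + (- 1) * z^+20 + 1 * z^+22 + (- 1) * z^+26) z4); ring.
have h7 : 1 * T1 (z^+7) = ((- 3) * z^+0 + 1 * z^+1 + 4 * z^+2 + 5 * z^+3).
  rewrite /T1; apply: (@step _ _ _ _ 3); first by rewrite subr_eq0 eq_sym -(prim_order_dvd hz).
  apply: (@red z _ _ (3 * z^+0 + (- 1) * z^+1 + (- 4) * z^+2 + (- 5) * z^+3 + (- 3) * z^+4 + 1 * z^+5 + 4 * z^+6 + (- 2) * z^+7 + 6 * z^+8 + 11 * z^+9 + 11 * z^+10 + 2 * z^+11 + (- 6) * z^+12 + (- 11) * z^+13 + (- 1) * z^+14 + (- 5) * z^+15 + (- 6) * z^+16 + (- 4) * z^+17 + 1 * z^+18 + 5 * z^+19 + 6 * z^+20 + (- 1) * z^+23 + (- 1) * z^+24 + 1 * z^+27 + (- 1) * z^+31) z4); ring.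
have hS : T1 (z^+1) + T1 (z^+2) + T1 (z^+3) + T1 (z^+4) + T1 (z^+5) + T1 (z^+6) + T1 (z^+7) = -12.
  apply: (mulfI (_ : (1:algC) != 0)); first exact: oner_neq0.
  rewrite !mulrDr h1 h2 h3 h4 h5 h6 h7. ring.
rewrite hS; by field.
Qed.

Lemma val2 (z : algC) (hz : 8.-primitive_root z) : F z [::1;1;1;1;1;1] chi_SD = -17/4.
Proof.
have z4 := @z4E z hz.
rewrite F2E sumE.
have h1 : 4 * T2 (z^+1) = ((- 34) * z^+0 + (- 58) * z^+1 + (- 48) * z^+2 + (- 10) * z^+3).
  rewrite /T2; apply: (@step _ _ _ _ 7); first by rewrite subr_eq0 eq_sym -(prim_order_dvd hz).
  apply: (@red z _ _ (34 * z^+0 + (- 180) * z^+1 + 356 * z^+2 + (- 290) * z^+3 + 68 * z^+4 + 22 * z^+5 + (- 10) * z^+6) z4); ring.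
have h2 : 4 * T2 (z^+2) = ((- 1) * z^+2).
  rewrite /T2; apply: (@step _ _ _ _ 7); first by rewrite subr_eq0 eq_sym -(prim_order_dvd hz).
  apply: (@red z _ _ (1 * z^+2 + (- 7) * z^+4 + 28 * z^+6 + (- 24) * z^+8 + 3 * z^+10 + (- 1) * z^+12) z4); ring.
have h3 : 4 * T2 (z^+3) = ((- 34) * z^+0 + (- 10) * z^+1 + 48 * z^+2 + (- 58) * z^+3).
  rewrite /T2; apply: (@step _ _ _ _ 7); first by rewrite subr_eq0 eq_sym -(prim_order_dvd hz).
  apply: (@red z _ _ (34 * z^+0 + 10 * z^+1 + (- 48) * z^+2 + (- 180) * z^+3 + (- 104) * z^+4 + 326 * z^+5 + 356 * z^+6 + 390 * z^+7 + (- 904) * z^+8 + (- 290) * z^+9 + (- 706) * z^+10 + 1290 * z^+11 + 68 * z^+12 + 640 * z^+13 + (- 974) * z^+14 + 22 * z^+15 + (- 278) * z^+16 + 368 * z^+17 + (- 10) * z^+18 + 48 * z^+19 + (- 58) * z^+20) z4); ring.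
have h4 : 4 * T2 (z^+4) = (0).
  rewrite /T2; apply: (@step _ _ _ _ 7); first by rewrite subr_eq0 eq_sym -(prim_order_dvd hz).
  apply: (@red z _ _ (8 * z^+12 + (- 4) * z^+16 + (- 4) * z^+24) z4); ring.
have h5 : 4 * T2 (z^+5) = ((- 34) * z^+0 + 58 * z^+1 + (- 48) * z^+2 + 10 * z^+3).
  rewrite /T2; apply: (@step _ _ _ _ 7); first by rewrite subr_eq0 eq_sym -(prim_order_dvd hz).
  apply: (@red z _ _ (34 * z^+0 + (- 58) * z^+1 + 48 * z^+2 + (- 10) * z^+3 + (- 34) * z^+4 + (- 180) * z^+5 + 358 * z^+6 + (- 326) * z^+7 + 104 * z^+8 + 180 * z^+9 + 356 * z^+10 + (- 892) * z^+11 + 904 * z^+12 + (- 390) * z^+13 + (- 356) * z^+14 + (- 290) * z^+15 + 1126 * z^+16 + (- 1290) * z^+17 + 706 * z^+18 + 290 * z^+19 + 68 * z^+20 + (- 740) * z^+21 + 974 * z^+22 + (- 640) * z^+23 + (- 68) * z^+24 + 22 * z^+25 + 244 * z^+26 + (- 368) * z^+27 + 278 * z^+28 + (- 22) * z^+29 + (- 10) * z^+30 + (- 38) * z^+31 + 58 * z^+32 + (- 48) * z^+33 + 10 * z^+34) z4); ring.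
have h6 : 4 * T2 (z^+6) = (1 * z^+2).
  rewrite /T2; apply: (@step _ _ _ _ 7); first by rewrite subr_eq0 eq_sym -(prim_order_dvd hz).
  apply: (@red z _ _ ((- 1) * z^+2 + 1 * z^+6 + 7 * z^+8 + (- 1) * z^+10 + (- 7) * z^+12 + (- 20) * z^+14 + 7 * z^+16 + 28 * z^+18 + 28 * z^+20 + (- 28) * z^+22 + (- 24) * z^+24 + (- 7) * z^+26 + 24 * z^+28 + 3 * z^+30 + (- 3) * z^+32 + (- 3) * z^+34 + (- 1) * z^+36 + (- 4) * z^+38 + 1 * z^+40) z4); ring.
have h7 : 4 * T2 (z^+7) = ((- 34) * z^+0 + 10 * z^+1 + 48 * z^+2 + 58 * z^+3).
  rewrite /T2; apply: (@step _ _ _ _ 7); first by rewrite subr_eq0 eq_sym -(prim_order_dvd hz).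
  apply: (@red z _ _ (34 * z^+0 + (- 10) * z^+1 + (- 48) * z^+2 + (- 58) * z^+3 + (- 34) * z^+4 + 10 * z^+5 + 48 * z^+6 + (- 180) * z^+7 + 104 * z^+8 + 326 * z^+9 + 358 * z^+10 + 180 * z^+11 + (- 104) * z^+12 + (- 326) * z^+13 + 356 * z^+14 + (- 390) * z^+15 + (- 904) * z^+16 + (- 892) * z^+17 + (- 356) * z^+18 + 390 * z^+19 + 904 * z^+20 + (- 290) * z^+21 + 706 * z^+22 + 1290 * z^+23 + 1126 * z^+24 + 290 * z^+25 + (- 706) * z^+26 + (- 1290) * z^+27 + 68 * z^+28 + (- 640) * z^+29 + (- 974) * z^+30 + (- 740) * z^+31 + (- 68) * z^+32 + 640 * z^+33 + 974 * z^+34 + 22 * z^+35 + 278 * z^+36 + 368 * z^+37 + 244 * z^+38 + (- 22) * z^+39 + (- 278) * z^+40 + (- 368) * z^+41 + (- 10) * z^+42 + (- 48) * z^+43 + (- 58) * z^+44 + (- 38) * z^+45 + 10 * z^+46 + 48 * z^+47 + 58 * z^+48) z4); ring.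
have hS : T2 (z^+1) + T2 (z^+2) + T2 (z^+3) + T2 (z^+4) + T2 (z^+5) + T2 (z^+6) + T2 (z^+7) = -34.
  apply: (mulfI (_ : (4:algC) != 0)); first by rewrite pnatr_eq0.
  rewrite !mulrDr h1 h2 h3 h4 h5 h6 h7. ring.
rewrite hS; by field.
Qed.
Lemma not_int (a b : int) : b != 0 -> ~~ (b %| a)%Z -> ~ ((a%:~R / b%:~R : algC) \is a Num.int).
Proof.
move=> hb hd /intrP [n h]; move/negP: hd; apply; apply/dvdzP; exists n.
have hb' : (b%:~R : algC) != 0 by rewrite intr_eq0.
apply/eqP; rewrite -(eqr_int algC) intrM -h mulfVK //.
Qed.
Lemma ord2 : order_RZ (-3/2 : algC) 2.
Proof.
split => //.
- by rewrite rpred_div ?rpredN ?realn.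
- have -> : (2%:R * (-3/2) : algC) = (-3)%:~R by rewrite -[(-3)%:~R]/(-(3%:R)); field.
  exact: intr_int.
move=> [|[|m]] //= _.
have -> : (1%:R * (-3/2) : algC) = (-3)%:~R / (2%:~R) by rewrite -[(-3)%:~R]/(-(3%:R)); field.
exact: not_int.
Qed.
Lemma ord4 : order_RZ (-17/4 : algC) 4.
Proof.
split => //.
- by rewrite rpred_div ?rpredN ?realn.
- have -> : (4%:R * (-17/4) : algC) = (-17)%:~R by rewrite -[(-17)%:~R]/(-(17%:R)); field.
  exact: intr_int.
move=> [|[|[|[|m]]]] //= _.
- have -> : (1%:R * (-17/4) : algC) = (-17)%:~R / (4%:~R) by rewrite -[(-17)%:~R]/(-(17%:R)); field.
  exact: not_int.
- have -> : (2%:R * (-17/4) : algC) = (-34)%:~R / (4%:~R) by rewrite -[(-34)%:~R]/(-(34%:R)); field.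
  exact: not_int.
- have -> : (3%:R * (-17/4) : algC) = (-51)%:~R / (4%:~R) by rewrite -[(-51)%:~R]/(-(51%:R)); field.
  exact: not_int.
Qed.

Theorem mainTheorem7 (z : algC) (hz : 8.-primitive_root z) :
  order_RZ (F z [:: 1; 1] chi_SD) 2 /\
  order_RZ (F z [:: 1; 1; 1; 1; 1; 1] chi_SD) 4.
Proof. by rewrite (@val1 z hz) (@val2 z hz); split; [exact: ord2 | exact: ord4]. Qed.
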